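(* Let $a,b\in\mathbb{R}^n$ with $a\ll b$ and let $X=[a,b]=\{z\in\mathbb{R}^n: a\le z\le b\}$. Let $\{B_i\}_{i\in\mathbb{N}}$ be a sequence of experiments in $X$ (as in the context) and let $\succeq^*$ be a continuous preference on $X$. Then for each $k\in\mathbb{N}$ there exists a continuous preference $\succeq_k$ on $X$ that strongly rationalizes the choice function of order $k$ generated by $\succeq^*$, such that $\succeq_k\to X\times X$ (the relation of complete indifference) in the topology of closed convergence.
   Context: For $x,y\in\mathbb{R}^n$, $x\ge y$ means $x_i\ge y_i$ for all $i$ and $x\gg y$ means $x_i>y_i$ for all $i$. A preference on $X$ is a complete and transitive binary relation $\succeq\subseteq X\times X$; it is continuous if it is a closed subset of $X\times X$. A sequence of experiments is a sequence $\{B_i\}_{i\in\mathbb{N}}$ of unordered pairs $B_i=\{x_i,y_i\}\subseteq X$ such that $B=\bigcup_i B_i$ is dense in $X$ and for all $x,y\in B$ there is $k$ with $B_k=\{x,y\}$; set $\Sigma_k=\{B_1,\dots,B_k\}$. For a preference $\succeq$ and a finite set $A$, $c_{\succeq}(A)=\{x\in A: x\succeq y \text{ for all } y\in A\}$. The choice function of order $k$ generated by $\succeq^*$ is the map $B_i\mapsto c_{\succeq^*}(B_i)$ on $\Sigma_k$. A preference $\succeq_k$ strongly rationalizes a choice function $c$ on $\Sigma_k$ if $c(B_i)=c_{\succeq_k}(B_i)$ for all $B_i\in\Sigma_k$. Topology of closed convergence on closed subsets of $X\times X$: for a sequence $\mathcal{F}=\{F^n\}$ of closed sets, $\mathrm{Li}(\mathcal{F})$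 is the set of $(x,y)$ such that every neighborhood $V$ of $(x,y)$ meets $F^n$ for all sufficiently large $n$, and $\mathrm{Ls}(\mathcal{F})$ is the set of $(x,y)$ such that every neighborhood $V$ of $(x,y)$ meets $F^n$ for infinitely many $n$; $F^n\to F$ iff $\mathrm{Li}(\mathcal{F})=F=\mathrm{Ls}(\mathcal{F})$. *)

(* Defs.v *)
(* Points of R^n are row vectors 'rV[R]_n
   (with their canonical normed/topological structure); X*X carries
   the product topology. *)
From mathcomp Require Import all_boot all_order all_algebra.
From mathcomp Require Import all_classical all_reals all_analysis.
Set Implicit Arguments. Unset Strict Implicit. Unset Printing Implicit Defensive.
Import Order.TTheory GRing.Theory Num.Theory numFieldNormedType.Exports.
Local Open Scope classical_set_scope.
Local Open Scope ring_scope.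

Section Defs.
Context {R : realType} {n : nat}.
Notation V := 'rV[R]_n.

Definition vge (x y : V) : Prop := forall i : 'I_n, y ord0 i <= x ord0 i.
Definition vgg (x y : V) : Prop := forall i : 'I_n, y ord0 i < x ord0 i.

Definition box (a b : V) : set V := [set z | vge z a /\ vge b z].

Definition preference (X : set V) (P : set (V * V)) : Prop :=
  P `<=` X `*` X /\
  (forall x y, X x -> X y -> P (x, y) \/ P (y, x)) /\
  (forall x y z, P (x, y) -> P (y, z) -> P (x, z)).

Definition closed_in (S : set (V * V)) (F : set (V * V)) : Prop :=
  closure F `&` S `<=` F.

Definition continuous_preference (X : set V) (P : set (V * V)) : Prop :=
  preference X P /\ closed_in (X `*` X) P.

(* unordered pair B_i = {x_i, y_i} given by e i = (x_i, y_i) *)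
Definition exp_pair (e : nat -> V * V) (i : nat) : set V :=
  [set (e i).1; (e i).2].

Definition exp_union (e : nat -> V * V) : set V :=
  \bigcup_(i in setT) exp_pair e i.

Definition sequence_of_experiments (X : set V) (e : nat -> V * V) : Prop :=
  (forall i, exp_pair e i `<=` X) /\
  X `<=` closure (exp_union e) /\
  (forall x y, exp_union e x -> exp_union e y ->
     exists k, exp_pair e k = [set x; y]).

Definition choice (P : set (V * V)) (A : set V) : set V :=
  [set x | A x /\ forall y, A y -> P (x, y)].

(* P strongly rationalizes the choice function of order k generated by Pstar:
   Sigma_k = {B_i | i < k} (0-based indexing of the paper's B_1..B_k) *)
Definition strongly_rationalizes_order (e : nat -> V * V) (k : nat)
  (Pstar P : set (V * V)) : Prop :=
  forall i, (i < k)%N -> choice Pstar (exp_pair e i) = choice P (exp_pair e i).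

(* Kuratowski limits inside the space S = X x X *)
Definition Li (S : set (V * V)) (F : nat -> set (V * V)) : set (V * V) :=
  [set p | S p /\ forall U, nbhs p U ->
      \forall m \near \oo, (U `&` F m) !=set0].
Definition Ls (S : set (V * V)) (F : nat -> set (V * V)) : set (V * V) :=
  [set p | S p /\ forall U, nbhs p U ->
      forall N, exists2 m, (N <= m)%N & (U `&` F m) !=set0].

Definition closed_converges (S : set (V * V)) (F : nat -> set (V * V))
  (G : set (V * V)) : Prop := Li S F = G /\ Ls S F = G.

End Defs.

(* Main.v *)
Require Import Defs.
From mathcomp Require Import all_boot all_order all_algebra.
From mathcomp Require Import all_classical all_reals all_analysis.
From mathcomp Require Import zify ring lra.
Import Order.TTheory GRing.Theory Num.Theory numFieldNormedType.Exports.
Local Open Scope classical_set_scope.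
Local Open Scope ring_scope.

Section Helpers.
Context {R : realType} {n : nat}.
Notation V := 'rV[R]_n.

Fixpoint pts (e : nat -> V * V) (k : nat) : seq V :=
  if k is k'.+1 then (e k').1 :: (e k').2 :: pts e k' else [::].

Lemma size_pts e k : size (pts e k) = (2 * k)%N.
Proof. elim: k => //= k ->; lia. Qed.

Lemma mem_ptsP e k z : z \in pts e k <-> exists2 j, (j < k)%N & (z = (e j).1 \/ z = (e j).2).
Proof.
elim: k => [|k IH] /=; first by split => // -[].
rewrite !in_cons; split.
- case/orP => [/eqP ->|/orP [/eqP ->|/IH [j jk hj]]].
  + by exists k => //; left.
  + by exists k => //; right.
  + by exists j => //; apply: ltnW.
- move=> [j]; rewrite ltnS leq_eqVlt => /orP [/eqP jk|jk] hz.
  + by subst j; case: hz => ->; rewrite eqxx ?orbT.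
  + by apply/orP; right; apply/orP; right; apply/IH; exists j.
Qed.

Lemma count_sub_lt (T : eqType) (a1 a2 : pred T) s x :
  subpred a1 a2 -> x \in s -> a2 x -> ~~ a1 x -> (count a1 s < count a2 s)%N.
Proof.
move=> sub; elim: s => //= y s IH; rewrite inE => /orP [/eqP <-| xs] a2x na1x.
  rewrite a2x (negbTE na1x) /=; have := sub_count sub s; lia.
have := IH xs a2x na1x; have := sub y; case: (a1 y); case: (a2 y) => //=; try lia.
Qed.

Definition rk (P : set (V * V)) (s : seq V) (p : V) : nat :=
  count (fun q => `[< P (p, q) >]) s.

Lemma rk_le (X : set V) P s p q : preference X P -> P (p, q) -> (rk P s q <= rk P s p)%N.
Proof.
move=> [_ [_ tr]] hpq; apply: sub_count => r /asboolP hqr; apply/asboolP.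
exact: tr hpq hqr.
Qed.

Lemma rk_lt (X : set V) P s p q : preference X P -> X p -> X q -> q \in s ->
  ~ P (p, q) -> (rk P s p < rk P s q)%N.
Proof.
move=> [_ [tot tr]] Xp Xq qs npq.
have hqp : P (q, p) by case: (tot p q Xp Xq).
apply: (@count_sub_lt _ _ _ _ q) => //.
- move=> r /asboolP hpr; apply/asboolP; exact: tr hqp hpr.
- by apply/asboolP; case: (tot q q Xq Xq).
- by apply/negP => /asboolP.
Qed.

Lemma rkP (X : set V) P s p q : preference X P -> X p -> X q -> q \in s ->
  P (p, q) <-> (rk P s q <= rk P s p)%N.
Proof.
move=> pr Xp Xq qs; split; first exact: (@rk_le X).
move=> h; case: (pselect (P (p, q))) => // np; exfalso.
have := @rk_lt X P s p q pr Xp Xq qs np; lia.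
Qed.

Definition bump (d h : R) (q z : V) : R := h * Num.max 0 (1 - `|z - q| / d).

Definition util (w : V -> R) (d : R) (s : seq V) (z : V) : R :=
  \big[Num.max/0]_(q <- s) bump d (w q) q z.

Lemma util_ge0 w d s z : 0 <= util w d s z.
Proof.
rewrite /util; elim: s => [|q s IH]; rewrite ?big_nil ?big_cons //.
by rewrite le_max IH orbT.
Qed.

Lemma util_ge w d s z q : q \in s -> bump d (w q) q z <= util w d s z.
Proof. by move=> qs; rewrite /util; exact: (le_bigmax_seq 0 q predT). Qed.

Lemma util_le w d s z c : 0 <= c -> (forall q, q \in s -> bump d (w q) q z <= c) ->
  util w d s z <= c.
Proof.
move=> c0 h; rewrite /util big_seq_cond; apply: bigmax_le => // q /andP [qs _].
exact: h.
Qed.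

Lemma bump_cont d h q : continuous (bump d h q).
Proof.
have hg : continuous (fun z : V => 1 - `|z - q| / d).
  move=> y; apply: (@continuousB R R^o _ (fun=> 1) (fun z : V => `|z - q| / d)).
    exact: cst_continuous.
  apply: (@continuousM R _ (fun z : V => `|z - q|) (fun=> d^-1)); last exact: cst_continuous.
  apply: (@continuous_comp _ _ _ (fun z : V => z - q) (@Num.Def.normr _ _)); last exact: norm_continuous.
  apply: (@continuousB R _ _ id (fun=> q)); [exact: cvg_id | exact: cst_continuous].
have hm := @max_fun_continuous _ _ _ (fun=> (0:R)) _ ltac:(exact: cst_continuous) hg.
move=> z; rewrite /bump.
apply: (@continuousM R _ (fun=> h) (fun z : V => Num.max 0 (1 - `|z - q| / d)) z);
  first exact: cst_continuous.
exact: hm.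
Qed.

Lemma util_cont w d s : continuous (util w d s).
Proof.
rewrite /util; elim: s => [|q s IH].
  have -> : (fun z : V => \big[Num.max/0]_(q <- [::]) bump d (w q) q z) = fun=> 0.
    by apply: funext => z; rewrite big_nil.
  exact: cst_continuous.
have -> : (fun z : V => \big[Num.max/0]_(q0 <- q :: s) bump d (w q0) q0 z) =
  (bump d (w q) q) \max (fun z => \big[Num.max/0]_(q0 <- s) bump d (w q0) q0 z).
  by apply: funext => z; rewrite big_cons.
exact: max_fun_continuous (bump_cont _ _ _) IH.
Qed.

Lemma sep1 (x : V) (s : seq V) : exists2 d : R, 0 < d & forall q, q \in s -> q != x -> d <= `|x - q|.
Proof.
elim: s => [|q s [d d0 IH]]; first by exists 1.
case: (eqVneq q x) => [->|qx].
  exists d => // r; rewrite in_cons => /orP [/eqP ->|]; first by rewrite eqxx.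
  exact: IH.
exists (Num.min d `|x - q|).
  by rewrite lt_min d0 normr_gt0 subr_eq0 eq_sym qx.
move=> r; rewrite in_cons => /orP [/eqP ->|rs] rx; first by rewrite ge_min lexx orbT.
by rewrite ge_min IH.
Qed.

Lemma sep_exists (s : seq V) : exists2 d : R, 0 < d &
  forall p q, p \in s -> q \in s -> p != q -> d <= `|p - q|.
Proof.
elim: s => [|x s [d1 d10 IH]]; first by exists 1.
have [d2 d20 H2] := sep1 x s.
exists (Num.min d1 d2); first by rewrite lt_min d10 d20.
move=> p q; rewrite !in_cons => /orP [/eqP ->|ps] /orP [/eqP ->|qs] pq.
- by rewrite eqxx in pq.
- by rewrite ge_min H2 ?orbT // eq_sym.
- by rewrite ge_min distrC H2 ?orbT.
- by rewrite ge_min IH.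
Qed.

Lemma util_at (w : V -> R) (d : R) (s : seq V) (p : V) : 0 < d -> 0 <= w p -> p \in s ->
  (forall q, q \in s -> q != p -> d <= `|p - q|) ->
  (forall q, 0 <= w q) -> util w d s p = w p.
Proof.
move=> d0 wp0 ps sep w0; apply/eqP; rewrite eq_le; apply/andP; split.
  apply: util_le => // q qs; rewrite /bump.
  case: (eqVneq q p) => [->|qp].
    by rewrite subrr normr0 mul0r subr0 (max_r (@ler01 R)) mulr1.
  rewrite max_l ?mulr0 //.
  rewrite subr_le0 ler_pdivlMr // mul1r; exact: sep.
have := util_ge w d s p p ps; rewrite /bump subrr normr0 mul0r subr0.
by rewrite (max_r (@ler01 R)) mulr1; apply.
Qed.

Lemma util_far (w : V -> R) (d : R) (s : seq V) (z : V) : 0 < d -> (forall q, q \in s -> d <= `|z - q|) ->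
  util w d s z <= 0.
Proof.
move=> d0 far; apply: util_le => // q qs; rewrite /bump max_l ?mulr0 //.
by rewrite subr_le0 ler_pdivlMr // mul1r; exact: far.
Qed.

Lemma entry_le (x : V) j : `|x ord0 j| <= `|x|.
Proof.
have -> : `|x| = mx_norm x by [].
rewrite mx_normrE; exact: (le_bigmax _ _ (ord0, j)).
Qed.

Lemma norm_le (x : V) c : 0 <= c -> (forall j, `|x ord0 j| <= c) -> `|x| <= c.
Proof.
move=> c0 h; have -> : `|x| = mx_norm x by [].
rewrite mx_normrE; apply: bigmax_le => // -[i j] _ /=.
by rewrite (ord1 i).
Qed.

Lemma natr_dist (j1 j2 : nat) : j1 != j2 -> 1 <= `|j1%:R - j2%:R : R|.
Proof.
wlog: j1 j2 / (j1 < j2)%N.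
  move=> H ne; case: (ltngtP j1 j2) => h; first exact: H.
  - by rewrite distrC; apply: H => //; rewrite eq_sym.
  - by rewrite h eqxx in ne.
move=> lt _; rewrite distrC -(natrB _ (ltnW lt)) ger0_norm ?ler0n // ler1n subn_gt0 //.
Qed.

Lemma pigeon (N : nat) (w : 'I_N -> R) (c L del : R) : 0 < L -> 0 <= del ->
  2 * N%:R * del < L ->
  exists t, [/\ c <= t, t <= c + L & forall i, del <= `|t - w i|].
Proof.
move=> L0 del0; case: N w => [|N] w hN.
  by exists c; split => //; [lra | case].
set h := L / N.+1%:R.
have N0 : (0 : R) < N.+1%:R by rewrite ltr0n.
have h0 : 0 < h by rewrite divr_gt0.
have hL : h * N.+1%:R = L by rewrite /h mulfVK // gt_eqF.
have hh : 2 * del < h.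
  rewrite /h ltr_pdivlMr //; rewrite mulrAC in hN; exact: hN.
pose t (j : 'I_N.+2) := c + j%:R * h.
have [[j Hj]|nJ] := pselect (exists j : 'I_N.+2, forall i, del <= `|t j - w i|).
  exists (t j); split => //; rewrite /t.
  - have : 0 <= j%:R * h by rewrite mulr_ge0 ?ler0n // ltW.
    lra.
  - have hj : j%:R * h <= L by rewrite -hL mulrC ler_pM2l // ler_nat -ltnS.
    lra.
have H j : exists i, `|t j - w i| < del.
  case: (pselect (exists i, `|t j - w i| < del)) => // hn; exfalso; apply: nJ.
  exists j => i; rewrite leNgt; apply/negP => hlt; apply: hn; by exists i.
have [f hf] := fin_all_exists H.
have inj : injective f.
  move=> j1 j2 e; apply/eqP; apply: contraT => ne.
  have h1 := hf j1; have h2 := hf j2; rewrite e in h1.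
  have htr := ler_distD (w (f j2)) (t j1) (t j2).
  rewrite (distrC (w (f j2))) in htr.
  have ht : `|t j1 - t j2| = `|j1%:R - j2%:R| * h.
    by rewrite /t opprD addrACA subrr add0r -mulrBl normrM (gtr0_norm h0).
  have ne' : (j1 : nat) != j2 by [].
  have H1 := natr_dist j1 j2 ne'.
  rewrite ht in htr; have := ler_peMl (ltW h0) H1; lra.
have := leq_card f inj; rewrite !card_ord; lia.
Qed.

Lemma key (a b : V) (i0 : 'I_n) (s : nat -> seq V) (d : nat -> R) (y : V) (eps : R) :
  a ord0 i0 < b ord0 i0 -> box a b y -> 0 < eps ->
  (forall k, size (s k) = (2 * k)%N) -> (forall k, 0 <= d k) ->
  (forall k, 4 * k%:R * d k * k.+1%:R <= 1) ->
  \forall k \near \oo, exists y', [/\ box a b y', `|y - y'| < eps &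
     forall q, q \in s k -> d k <= `|y' - q|].
Proof.
move=> ab [ya yb] e0 hs d0 hd.
have ay : a ord0 i0 <= y ord0 i0 := ya i0.
have yb0 : y ord0 i0 <= b ord0 i0 := yb i0.
set a0 := a ord0 i0 in ab ay *; set b0 := b ord0 i0 in ab yb0 *.
set y0 := y ord0 i0 in ay yb0 *.
set L := Num.min (eps / 2) ((b0 - a0) / 2).
have L0 : 0 < L by rewrite lt_min !divr_gt0 // subr_gt0.
have L1 : L <= eps / 2 by rewrite ge_min lexx.
have L2 : L <= (b0 - a0) / 2 by rewrite ge_min lexx orbT.
have [c [c1 c2 c3 c4]] : exists c, [/\ a0 <= c, c + L <= b0, c <= y0 & y0 <= c + L].
  case: (lerP y0 ((a0 + b0) / 2)) => hy.
    by exists y0; split; lra.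
  by exists (y0 - L); split; lra.
exists (Num.truncn L^-1).+1 => // k /= hk.
have hK : L^-1 < k.+1%:R.
  apply: (lt_le_trans (truncnS_gt _)); rewrite ler_nat; exact: ltn_trans hk (ltnSn k).
have hLk : 1 < L * k.+1%:R.
  by have := hK; rewrite -(ltr_pM2l L0) mulfV ?gt_eqF.
have K0 : (0 : R) < k.+1%:R by rewrite ltr0n.
have hdk := hd k; have dk0 := d0 k.
have h4 : 2 * (size (s k))%:R * d k < L.
  have h5 : 4 * k%:R * d k * k.+1%:R < L * k.+1%:R by apply: le_lt_trans hLk.
  rewrite ltr_pM2r // in h5.
  rewrite hs natrM; have -> : 2 * (2%:R * k%:R) * d k = 4 * k%:R * d k by ring.
  exact: h5.
pose w (i : 'I_(size (s k))) := (nth 0 (s k) i) ord0 i0.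
have [t [t1 t2 tw]] := @pigeon _ w c L (d k) L0 dk0 h4.
pose y' := \row_j (if j == i0 then t else y ord0 j).
exists y'; split.
- split => j; rewrite /y' mxE; case: eqP => [->|_].
  + rewrite -/a0; lra.
  + exact: ya.
  + rewrite -/b0; lra.
  + exact: yb.
- apply: (le_lt_trans (norm_le (y - y') L _ _)); [lra | | lra].
  move=> j; rewrite !mxE; case: eqP => [->|_].
    rewrite -/y0 ler_norml; apply/andP; split; lra.
  by rewrite subrr normr0 ltW.
- move=> q qs.
  have iq : (index q (s k) < size (s k))%N by rewrite index_mem.
  have := tw (Ordinal iq); rewrite /w /= nth_index // => h.
  apply: (le_trans h); apply: le_trans (entry_le _ i0).
  by rewrite !mxE eqxx.
Qed.

End Helpers.

Theorem proposition1 (R : realType) (n : nat) (a b : 'rV[R]_n)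
  (e : nat -> 'rV[R]_n * 'rV[R]_n) (Pstar : set ('rV[R]_n * 'rV[R]_n)) :
  vgg b a ->
  sequence_of_experiments (box a b) e ->
  continuous_preference (box a b) Pstar ->
  exists P : nat -> set ('rV[R]_n * 'rV[R]_n),
    (forall k, continuous_preference (box a b) (P k) /\
               strongly_rationalizes_order e k Pstar (P k)) /\
    closed_converges (box a b `*` box a b) P (box a b `*` box a b).
Proof.
move=> ab seqe [prefS clS].
set X := box a b.
have ptsX k z : z \in pts e k -> X z.
  move=> /mem_ptsP [j _ [->|->]]; apply: (seqe.1 j); [by left | by right].
have hsep k : exists d : R, [/\ 0 < d, 4 * k%:R * d * k.+1%:R <= 1 &
    forall p q, p \in pts e k -> q \in pts e k -> p != q -> d <= `|p - q|].
  have [d1 d10 H] := sep_exists (pts e k).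
  have K0 : (0 : R) < k.+1%:R by rewrite ltr0n.
  have M0 : (0 : R) < 4 * k.+1%:R ^+ 2 by rewrite mulr_gt0 // exprn_gt0.
  set m := (4 * k.+1%:R ^+ 2)^-1 : R.
  have m0 : 0 < m by rewrite invr_gt0.
  set del := Num.min d1 m.
  have del0 : 0 < del by rewrite lt_min d10 m0.
  have delm : del <= m by rewrite ge_min lexx orbT.
  exists del; split => //.
  - have kK : (k%:R : R) <= k.+1%:R by rewrite ler_nat.
    have e1 : 4 * k%:R * del * k.+1%:R <= 4 * k.+1%:R * del * k.+1%:R.
      by rewrite ler_pM2r // ler_pM2r // ler_pM2l.
    have e2 : 4 * k.+1%:R * del * k.+1%:R = (4 * k.+1%:R ^+ 2) * del by ring.
    have e3 : (4 * k.+1%:R ^+ 2) * del <= (4 * k.+1%:R ^+ 2) * m by rewrite ler_pM2l.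
    have e4 : (4 * k.+1%:R ^+ 2) * m = 1 by rewrite mulfV // gt_eqF.
    lra.
  - by move=> p q ps qs pq; rewrite ge_min H.
have [d hd] : {d : nat -> R & forall k, [/\ 0 < d k, 4 * k%:R * d k * k.+1%:R <= 1 &
    forall p q, p \in pts e k -> q \in pts e k -> p != q -> d k <= `|p - q|]}.
  exact: boolp.choice hsep.
pose w k (q : 'rV[R]_n) := ((rk Pstar (pts e k) q)%:R + 1 : R).
have w0 k q : 0 <= w k q by rewrite /w addr_ge0 ?ler0n.
pose U k := util (w k) (d k) (pts e k).
have Uat k p : p \in pts e k -> U k p = w k p.
  move=> ps; have [d0 _ hs] := hd k; apply: util_at => //.
  by move=> q qs qp; apply: hs => //; rewrite eq_sym.
have Pequiv k z y : z \in pts e k -> y \in pts e k -> (Pstar (z, y) <-> U k y <= U k z).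
  move=> zs ys; rewrite Uat // Uat // /w lerD2r ler_nat.
  exact: (@rkP R n X Pstar (pts e k) z y prefS (ptsX _ _ zs) (ptsX _ _ ys) ys).
exists (fun k => [set pq | X pq.1 /\ X pq.2 /\ U k pq.2 <= U k pq.1]).
split.
  move=> k; split.
    split.
      split; first by move=> [p q] [? [? _]].
      split.
        move=> x y Xx Xy; case: (lerP (U k y) (U k x)) => h; first by left.
        by right; split => //; split => //; apply: ltW.
      move=> x y z [Xx [Xy h1]] [_ [Xz h2]]; split => //; split => //.
      exact: le_trans h2 h1.
    move=> [p q] [cl [Xp Xq]].
    have cG : closed [set pq : 'rV[R]_n * 'rV[R]_n | U k pq.2 <= U k pq.1].
      have -> : [set pq : 'rV[R]_n * 'rV[R]_n | U k pq.2 <= U k pq.1] =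
          (fun pq : 'rV[R]_n * 'rV[R]_n => U k pq.1 - U k pq.2) @^-1` [set r | 0 <= r].
        by apply/seteqP; split => pq /=; rewrite subr_ge0.
      apply: (proj1 (continuous_closedP _)); last exact: closed_ge.
      move=> pq.
      apply: (@continuousB R R^o _ (fun pq : 'rV[R]_n * 'rV[R]_n => U k pq.1)
                                 (fun pq => U k pq.2)).
        apply: (@continuous_comp _ _ _ fst (U k)); [exact: cvg_fst | exact: util_cont].
      apply: (@continuous_comp _ _ _ snd (U k)); [exact: cvg_snd | exact: util_cont].
    have : closure [set pq : 'rV[R]_n * 'rV[R]_n | U k pq.2 <= U k pq.1] (p, q).
      by apply: (closureS _ cl) => -[x y] [_ [_ h]].
    by rewrite -(proj1 (closure_id _) cG) => h; split.
  move=> i ik.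
  have mem z : exp_pair e i z -> z \in pts e k.
    by case=> ->; apply/mem_ptsP; exists i => //; [left | right].
  apply/seteqP; split => z [Az Hz]; split => // y Ay.
    have := Hz y Ay => h.
    split; first exact: ptsX (mem _ Az).
    split; first exact: ptsX (mem _ Ay).
    exact: (proj1 (Pequiv k z y (mem _ Az) (mem _ Ay))).
  have [_ [_ h]] := Hz y Ay.
  exact: (proj2 (Pequiv k z y (mem _ Az) (mem _ Ay))).
set P := fun k => _.
have SLi : X `*` X `<=` Li (X `*` X) P.
  move=> [x y] Sxy; split => // U0 /nbhs_ballP [eps /= e0 hball].
  case: (posnP n) => [n0|n0].
    have xy : x = y.
      apply/matrixP => i [j hj]; exfalso.
      have h0 : (j < 0)%N by rewrite -n0.
      by [].

    subst y; exists 0%N => // k _; exists (x, x); split.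
      by apply: hball; apply: ballxx.
    by split; [exact: Sxy.1 | split; [exact: Sxy.2 | exact: lexx]].
  pose i0 := Ordinal n0.
  have hk := @key R n a b i0 (pts e) d y eps (ab i0) Sxy.2 e0 (size_pts e)
    (fun k => ltW (let: And3 h _ _ := hd k in h)) (fun k => let: And3 _ h _ := hd k in h).
  apply: filterS hk => k [y' [By' ny hq]].
  exists (x, y'); split.
    apply: hball; split; first exact: ballxx.
    by rewrite mx_norm_ball /ball_ /=.
  split; first exact: Sxy.1.
  split => //.
  apply: le_trans (util_ge0 _ _ _ _).
  have [d0 _ _] := hd k.
  exact: util_far.
have LiLs : Li (X `*` X) P `<=` Ls (X `*` X) P.
  move=> p [Sp H]; split => // U0 nU N.
  case: (H U0 nU) => N0 _ hN.
  exists (maxn N N0); first exact: leq_maxl.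
  exact: hN (leq_maxr N N0).
split; apply/seteqP; split.
- by move=> p [].
- exact: SLi.
- by move=> p [].
- by move=> p /SLi /LiLs.
Qed.
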